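(* Let $3\leq d\leq k$ be integers. Then in every connected $k$-colouring of the edges of $K_n$ there is a copy of $K_d$ whose edges receive at least $d$ distinct colours. Moreover, for all sufficiently large $n$ there exists a connected $k$-colouring of the edges of $K_n$ in which no copy of $K_d$ has edges of more than $d$ distinct colours.
   Context: A $k$-colouring of the edges of the complete graph $K_n$ (colours from $\{1,\dots,k\}$) is called connected if for each colour $i$ the edges of colour $i$ form a connected spanning subgraph of $K_n$. *)

(* Defs.v *)
From mathcomp Require Import all_boot.
Set Implicit Arguments. Unset Strict Implicit. Unset Printing Implicit Defensive.

(* An edge colouring of K_n with colours 'I_k (= {1,...,k} shifted to 0..k-1):
   a function c on ordered pairs of vertices that is symmetric; the values
   on the diagonal (x = x) are irrelevant. *)
Definition sym_colouring (n k : nat) (c : 'I_n -> 'I_n -> 'I_k) : Prop :=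
  forall x y, c x y = c y x.

Definition colour_rel (n k : nat) (c : 'I_n -> 'I_n -> 'I_k) (i : 'I_k) : rel 'I_n :=
  fun x y => (x != y) && (c x y == i).

Definition connected_colouring (n k : nat) (c : 'I_n -> 'I_n -> 'I_k) : Prop :=
  sym_colouring c /\ forall (i : 'I_k) (x y : 'I_n), connect (colour_rel c i) x y.

Definition edge_colours (n k : nat) (c : 'I_n -> 'I_n -> 'I_k) (S : {set 'I_n})
  : {set 'I_k} :=
  [set c x y | x in S, y in S & x != y].

(* Main.v *)
Require Import Defs.
From mathcomp Require Import all_boot.
From Stdlib Require Import Classical.
Set Implicit Arguments. Unset Strict Implicit. Unset Printing Implicit Defensive.

Lemma path_exit (T : finType) (e : rel T) (P : pred T) x p :
  path e x p -> P x -> ~~ P (last x p) -> exists u v, [/\ P u, ~~ P v & e u v].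
Proof.
elim: p x => [|y p IH] x /=; first by move=> _ ->.
case/andP=> exy hp Px; case Py: (P y).
  by apply: IH.
by move=> _; exists x, y; rewrite Py.
Qed.

Lemma conn_exit (T : finType) (e : rel T) (P : pred T) x y :
  connect e x y -> P x -> ~~ P y -> exists u v, [/\ P u, ~~ P v & e u v].
Proof. by case/connectP=> p hp ->; apply: path_exit. Qed.

Lemma conn_first (T : finType) (e : rel T) x y :
  connect e x y -> x != y -> exists w, e x w.
Proof.
case/connectP=> [[|w p]] /= hp ->; first by rewrite eqxx.
by case/andP: hp => h _ _; exists w.
Qed.

Definition rrel n k (c : 'I_n -> 'I_n -> 'I_k) (i : 'I_k) (V : {set 'I_n}) : rel 'I_n :=
  fun u v => [&& u \in V, v \in V & colour_rel c i u v].

Definition conn_on n k (c : 'I_n -> 'I_n -> 'I_k) (i : 'I_k) (V : {set 'I_n}) :=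
  forall u v, u \in V -> v \in V -> connect (rrel c i V) u v.

Definition no_rb n k (c : 'I_n -> 'I_n -> 'I_k) (V : {set 'I_n}) :=
  forall u v w, u \in V -> v \in V -> w \in V -> u != v -> v != w -> u != w ->
    c u v != c u w -> c v w != c u v -> c v w = c u w.

Lemma rrel_sym n k (c : 'I_n -> 'I_n -> 'I_k) i V :
  sym_colouring c -> symmetric (rrel c i V).
Proof.
move=> sc u v; rewrite /rrel /colour_rel /= eq_sym (sc u v).
by case: (u \in V); case: (v \in V).
Qed.

Lemma core n k (c : 'I_n -> 'I_n -> 'I_k) (V : {set 'I_n}) x a b e :
  sym_colouring c -> x \in V -> no_rb c V -> a != b -> a != e -> b != e ->
  conn_on c a V -> conn_on c b V -> conn_on c e V ->
  forall y z, y \in V :\ x -> z \in V :\ x -> ~~ connect (rrel c a (V :\ x)) y z -> False.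
Proof.
move=> sc xV nrb ab ae be ca cb ce y z yV zV nyz.
set V' := V :\ x.
pose R u v := connect (rrel c a V') u v.
have Rsym u v : R u v = R v u by rewrite /R (sym_connect_sym (rrel_sym a V' sc)).
have Rtr u v w : R u v -> R v w -> R u w by apply: connect_trans.
have Rin u v : R u v -> u \in V' -> v \in V'.
  move=> ruv uV; apply/negPn/negP => vV.
  have [p1 [p2 [h1 h2 h3]]] := conn_exit (P := mem V') ruv uV vV.
  by case/and3P: h3 => _ h _; move: h2; rewrite inE h.
have V'V u : u \in V' -> u \in V by rewrite in_setD1 => /andP [].
have V'x u : u \in V' -> u != x by rewrite in_setD1 => /andP [].
have F1 u w : u \in V' -> w \in V' -> ~~ R u w -> (c u w != a) && (u != w).
  move=> uV wV nR; apply/andP; split; apply/negP => /eqP h.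
    case: (eqVneq u w) => [huw|huw]; first by move: nR; rewrite huw /R connect0.
    by move: nR; rewrite /R connect1 // /rrel uV wV /colour_rel huw h eqxx.
  by move: nR; rewrite h /R connect0.
have F2 u u' w : u \in V' -> R u u' -> w \in V' -> ~~ R u w -> c u w = c u' w.
  move=> uV /connectP [p hp ->] wV; elim: p u uV hp => [|v p IH] u uV //= /andP [huv hp] nR.
  move: (huv); rewrite /rrel /colour_rel => /and3P [_ vV /andP [nuv /eqP cuv]].
  have nRv : ~~ R v w.
    by apply: contra nR; apply: Rtr; apply: connect1.
  rewrite -(IH v vV hp nRv).
  have /andP [h1 h2] := F1 u w uV wV nR.
  have /andP [h3 h4] := F1 v w vV wV nRv.
  symmetry; apply: nrb; rewrite ?V'V //; first by rewrite cuv eq_sym.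
  by rewrite cuv.
have F3 u v : u \in V' -> v \in V' -> ~~ R u v -> exists p, [/\ p \in V', R u p & c x p = a].
  move=> uV vV nR.
  have [p1 [p2 [h1 h2 h3]]] := conn_exit (P := R u) (ca u v (V'V u uV) (V'V v vV)) (connect0 _ _) nR.
  move: h3; rewrite /rrel /colour_rel => /and3P [p1V p2V /andP [np /eqP cp]].
  have p1V' := Rin u p1 h1 uV.
  case: (eqVneq p2 x) => [hx|hx].
    by exists p1; split => //; rewrite sc -cp hx.
  have p2V' : p2 \in V' by rewrite in_setD1 hx.
  move: h2; rewrite (Rtr u p1 p2) //; apply: connect1.
  by rewrite /rrel /colour_rel p1V' p2V' np cp eqxx.
have xy : x != y by rewrite eq_sym V'x.
have [w hw] := conn_first (cb x y xV (V'V y yV)) xy.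
move: hw; rewrite /rrel /colour_rel => /and3P [_ wV /andP [xw /eqP cxw]].
have wV' : w \in V' by rewrite in_setD1 eq_sym xw.
have [v [vV nwv]] : exists v, v \in V' /\ ~~ R w v.
  case: (boolP (R w y)) => Ry; last by exists y.
  case: (boolP (R w z)) => Rz; last by exists z.
  by move: nyz; have -> : connect (rrel c a (V :\ x)) y z = true by apply: (Rtr y w z) => //; rewrite Rsym.
have [p1 [p2 [h1 h2 h3]]] := conn_exit (P := R w) (ce w v (V'V w wV') (V'V v vV)) (connect0 _ _) nwv.
move: h3; rewrite /rrel /colour_rel => /and3P [p1V p2V /andP [np /eqP cp]].
have p1V' := Rin w p1 h1 wV'.
have tri u0 : u0 \in V' -> c x u0 = a -> ~~ R w u0 -> c u0 w = b.
  move=> u0V cu0 nR.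
  have /andP [f1 f2] := F1 u0 w u0V wV' ltac:(by rewrite Rsym).
  rewrite -cxw; apply: nrb => //; rewrite ?V'V //.
  - by rewrite eq_sym V'x.
  - by rewrite cu0 cxw.
  - by rewrite cu0.
case: (eqVneq p2 x) => [hx|hx].
  subst p2.
  have [u0 [u0V Rvu0 cu0]] := F3 v w vV wV' ltac:(by rewrite Rsym).
  have nwu0 : ~~ R w u0.
    by apply: contra nwv => h; rewrite (Rtr w u0 v) // Rsym.
  have hb := tri u0 u0V cu0 nwu0.
  have nu0p1 : ~~ R u0 p1.
    by apply: contra nwu0 => h; rewrite (Rtr w p1 u0) // Rsym.
  have /andP [f1 f2] := F1 u0 p1 u0V p1V' nu0p1.
  have he : c u0 p1 = c x p1.
    apply: nrb => //; rewrite ?V'V //.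
    - by rewrite eq_sym V'x.
    - by rewrite eq_sym V'x.
    - by rewrite cu0 sc cp.
    - by rewrite cu0.
  have hc := F2 w p1 u0 wV' h1 u0V nwu0.
  move: be; rewrite -hb sc hc sc he sc cp.
  by rewrite eqxx.
have p2V' : p2 \in V' by rewrite in_setD1 hx.
have [u0 [u0V Rpu0 cu0]] := F3 p2 w p2V' wV' ltac:(by rewrite Rsym).
have nwu0 : ~~ R w u0.
  by apply: contra h2 => h; rewrite (Rtr w u0 p2) // Rsym.
have hb := tri u0 u0V cu0 nwu0.
have hc1 := F2 p2 u0 w p2V' Rpu0 wV' ltac:(by rewrite Rsym).
have hc2 := F2 w p1 p2 wV' h1 p2V' h2.
move: be; rewrite -hb -hc1 sc hc2 cp.
by rewrite eqxx.
Qed.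

Lemma conn_dec n k (c : 'I_n -> 'I_n -> 'I_k) (i : 'I_k) (V : {set 'I_n}) :
  conn_on c i V \/ exists y z, [/\ y \in V, z \in V & ~~ connect (rrel c i V) y z].
Proof.
case: (classic (exists y z, [/\ y \in V, z \in V & ~~ connect (rrel c i V) y z])) => h; [by right|left].
move=> u v uV vV; apply/negPn/negP => nc; apply: h; by exists u, v.
Qed.

Lemma no_rb_sub n k (c : 'I_n -> 'I_n -> 'I_k) (V W : {set 'I_n}) :
  W \subset V -> no_rb c V -> no_rb c W.
Proof.
move=> /subsetP sWV nrb u v w uW vW wW; apply: nrb; exact: sWV.
Qed.

Lemma rb m : forall n k (c : 'I_n -> 'I_n -> 'I_k) (V : {set 'I_n}) (a b e : 'I_k),
  sym_colouring c -> #|V| = m.+2 -> a != b -> a != e -> b != e ->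
  conn_on c a V -> conn_on c b V -> conn_on c e V -> ~ no_rb c V.
Proof.
elim: m => [|m IH] n k c V a b e sc hV ab ae be ca cb ce nrb.
  have /cards2P [y [z [yz hV2]]] : #|V| == 2 by rewrite hV.
  have yV : y \in V by rewrite hV2 !inE eqxx.
  have zV : z \in V by rewrite hV2 !inE eqxx orbT.
  have col i : conn_on c i V -> c y z = i.
    move=> ci; have [w] := conn_first (ci y z yV zV) yz.
    rewrite /rrel /colour_rel => /and3P [_ wV /andP [yw /eqP cw]].
    move: wV; rewrite hV2 !inE => /orP [/eqP wy|/eqP wz].
      by move: yw; rewrite wy eqxx.
    by rewrite -cw wz.
  by move: ab; rewrite -(col a ca) -(col b cb) eqxx.
have [x xV] : exists x, x \in V by apply/card_gt0P; rewrite hV.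
have hV' : #|V :\ x| = m.+2 by move: hV; rewrite (cardsD1 x) xV => [[]].
have nrb' := no_rb_sub (subD1set V x) nrb.
case: (conn_dec c a (V :\ x)) => [ca'|[y [z [yV zV nyz]]]]; last first.
  exact: (core sc xV nrb ab ae be ca cb ce yV zV nyz).
case: (conn_dec c b (V :\ x)) => [cb'|[y [z [yV zV nyz]]]]; last first.
  by apply: (core sc xV nrb _ be ae cb ca ce yV zV nyz); rewrite eq_sym.
case: (conn_dec c e (V :\ x)) => [ce'|[y [z [yV zV nyz]]]]; last first.
  by apply: (core sc xV nrb _ _ ab ce ca cb yV zV nyz); rewrite eq_sym.
exact: (IH n k c (V :\ x) a b e sc hV' ab ae be ca' cb' ce' nrb').
Qed.

Lemma ec_mono n k (c : 'I_n -> 'I_n -> 'I_k) (S T : {set 'I_n}) :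
  S \subset T -> edge_colours c S \subset edge_colours c T.
Proof.
move=> /subsetP sST; apply/subsetP => a /imset2P [x y hx hy ->].
apply: imset2_f; first exact: sST.
by move: hy; rewrite !inE => /andP [/sST -> ->].
Qed.

Lemma ec_mem n k (c : 'I_n -> 'I_n -> 'I_k) (S : {set 'I_n}) x y :
  x \in S -> y \in S -> x != y -> c x y \in edge_colours c S.
Proof. by move=> hx hy hxy; apply: imset2_f; rewrite // inE hy hxy. Qed.

Lemma exists_out (T : finType) (S : {set T}) : #|S| < #|T| -> exists v, v \notin S.
Proof.
move=> hS; case: (pickP (fun v => v \notin S)) => [v hv|h]; first by exists v.
have : S = setT by apply/setP => v; rewrite inE; move: (h v) => /= /negbFE.
by move=> eS; move: hS; rewrite eS cardsT ltnn.
Qed.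

Lemma k_lt_n n k (c : 'I_n -> 'I_n -> 'I_k) :
  2 <= n -> connected_colouring c -> k < n.
Proof.
move=> hn [sc cc].
have h0 : 0 < n by apply: leq_trans hn.
have h1 : 1 < n by [].
pose x := Ordinal h0; pose y := Ordinal h1.
have : [set: 'I_k] \subset [set c x w | w in [set~ x]].
  apply/subsetP => a _.
  have [w] := conn_first (cc a x y) (isT : x != y).
  rewrite /colour_rel => /andP [xw /eqP <-].
  by apply: imset_f; rewrite !inE eq_sym.
move/subset_leq_card; rewrite cardsT card_ord => h.
have := leq_trans h (leq_imset_card _ _); rewrite cardsC1 card_ord.
by case: n hn {h0 h1 x y cc sc c h} => // n' _ /=; rewrite ltnS.
Qed.

Lemma grow n k (c : 'I_n -> 'I_n -> 'I_k) (S : {set 'I_n}) t :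
  connected_colouring c -> 0 < t -> t < k -> k < n -> #|S| = t -> t <= #|edge_colours c S| ->
  exists S' : {set 'I_n}, #|S'| = t.+1 /\ t.+1 <= #|edge_colours c S'|.
Proof.
move=> [sc cc] t0 tk kn hS hE.
have [v vS] : exists v, v \notin S by apply: exists_out; rewrite hS card_ord; apply: ltn_trans kn.
case: (ltnP t #|edge_colours c S|) => hE2.
  exists (v |: S); rewrite cardsU1 vS hS; split => //.
  by apply: leq_trans hE2 _; apply: subset_leq_card; apply: ec_mono; apply: subsetUr.
have eE : #|edge_colours c S| = t by apply/eqP; rewrite eqn_leq hE2 hE.
have [a aE] : exists a, a \notin edge_colours c S by apply: exists_out; rewrite eE card_ord.
have [u uS] : exists u, u \in S by apply/card_gt0P; rewrite hS.
have [p1 [p2 [h1 h2 h3]]] := conn_exit (P := mem S) (cc a u v) uS vS.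
move: h3; rewrite /colour_rel => /andP [np /eqP cp].
exists (p2 |: S); rewrite cardsU1 h2 hS; split => //.
have : a |: edge_colours c S \subset edge_colours c (p2 |: S).
  rewrite subUset; apply/andP; split; last by apply: ec_mono; apply: subsetUr.
  rewrite sub1set -cp; apply: ec_mem => //.
  - by rewrite in_setU1; apply/orP; right; exact: h1.
  - by rewrite in_setU1 eqxx.
move/subset_leq_card; rewrite cardsU1 aE eE.
done.
Qed.

Lemma card3 (T : finType) (u v w : T) :
  u != v -> v != w -> u != w -> #|u |: (v |: [set w])| = 3.
Proof.
move=> uv vw uw.
rewrite cardsU1 cardsU1 cards1 !inE (negbTE uv) (negbTE uw) (negbTE vw).
by [].
Qed.

Lemma base n k (c : 'I_n -> 'I_n -> 'I_k) :
  3 <= k -> 2 <= n -> connected_colouring c ->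
  exists S : {set 'I_n}, #|S| = 3 /\ 3 <= #|edge_colours c S|.
Proof.
move=> hk hn [sc cc].
have k0 : 0 < k by apply: leq_trans hk.
have k1 : 1 < k by apply: leq_trans hk.
have k2 : 2 < k by [].
have connT i : conn_on c i setT.
  move=> u v _ _; rewrite (@eq_connect _ _ (colour_rel c i)) //.
  by move=> x y; rewrite /rrel !inE.
have hV : #|[set: 'I_n]| = (n - 2).+2 by rewrite cardsT card_ord -addn2 subnK.
have hrb := rb sc hV (isT : Ordinal k0 != Ordinal k1) (isT : Ordinal k0 != Ordinal k2)
   (isT : Ordinal k1 != Ordinal k2) (connT _) (connT _) (connT _).
have [u [v [w [uv vw uw /and3P [h1 h2 h3]]]]] : exists u v w, [/\ u != v, v != w, u != w &
    [&& c u v != c u w, c v w != c u v & c v w != c u w]].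
  apply: NNPP => H; apply: hrb => u v w _ _ _ uv vw uw h1 h2.
  case: (eqVneq (c v w) (c u w)) => // h3; exfalso.
  by apply: H; exists u, v, w; split => //; rewrite h1 h2 h3.
exists (u |: (v |: [set w])); rewrite card3 //; split => //.
have <- : #|c u v |: (c v w |: [set c u w])| = 3 by rewrite card3 // eq_sym.
apply: subset_leq_card; apply/subsetP => a; rewrite !inE => /orP [/eqP ->|/orP [/eqP ->|/eqP ->]];
  apply: ec_mem => //; rewrite !inE ?eqxx ?orbT //.
Qed.

Lemma part1 d k : 3 <= d -> d <= k ->
  (forall (n : nat) (c : 'I_n -> 'I_n -> 'I_k),
      2 <= n -> connected_colouring c ->
      exists S : {set 'I_n}, #|S| = d /\ d <= #|edge_colours c S|).
Proof.
move=> hd hk n c hn hc.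
have kn := k_lt_n hn hc.
have [S0 [h0 h0']] := base (leq_trans hd hk) hn hc.
have : forall j, j + 3 <= d -> exists S : {set 'I_n}, #|S| = j + 3 /\ j + 3 <= #|edge_colours c S|.
  elim => [|j IH] hj; first by exists S0.
  have [S [hS hS']] := IH (ltnW hj).
  have := grow hc _ _ kn hS hS'; rewrite addSn; apply => //.
  - by rewrite addn3.
  - by apply: leq_trans _ hk; rewrite -addSn.
move/(_ (d - 3)); rewrite subnK //; apply; exact: leqnn.
Qed.

From mathcomp Require Import zify.

Definition col2 (k x y : nat) : nat :=
  if (x < 2*k) && (y < 2*k) then
    (if x %% 2 == y %% 2 then minn (x %/ 2) (y %/ 2) else maxn (x %/ 2) (y %/ 2))
  else if x < 2*k then x %/ 2 else if y < 2*k then y %/ 2 else 0.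

Definition own (k x : nat) := if x < 2*k then x %/ 2 else 0.

Lemma col2_sym k x y : col2 k x y = col2 k y x.
Proof.
rewrite /col2; case: (x < 2*k); case: (y < 2*k) => //=.
by rewrite eq_sym minnC maxnC.
Qed.

Lemma col2_own k x y : col2 k x y = own k x \/ col2 k x y = own k y.
Proof.
rewrite /col2 /own; case: (x < 2*k); case: (y < 2*k) => //=; auto.
case: eqP => _; rewrite /minn /maxn; case: ltnP; auto.
Qed.

Lemma col2_lt k x y : 0 < k -> col2 k x y < k.
Proof.
rewrite /col2 => hk; case hx: (x < 2*k); case hy: (y < 2*k) => //=;
 try case: eqP => _; lia.
Qed.

Definition cc (n k' : nat) (x y : 'I_n) : 'I_k'.+1 := inord (col2 k'.+1 x y).

Lemma cc_val n k' (x y : 'I_n) : nat_of_ord (cc k' x y) = col2 k'.+1 x y.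
Proof. by rewrite /cc inordK // col2_lt. Qed.

Lemma edge_ok n k' (i : 'I_k'.+1) (u v : 'I_n) :
  val u != val v -> col2 k'.+1 u v = i -> colour_rel (cc k') i u v.
Proof.
move=> huv hc; rewrite /colour_rel; apply/andP; split; first by [].
by apply/eqP/val_inj; rewrite /= cc_val.
Qed.

Lemma conn_hub n k' (i : 'I_k'.+1) (hn : 2 * k'.+1 <= n) (h x : 'I_n) :
  nat_of_ord h = 2 * i -> connect (colour_rel (cc k') i) h x.
Proof.
move=> hh.
have hi := ltn_ord i.
have near : forall y : 'I_n, y %/ 2 = i -> connect (colour_rel (cc k') i) h y.
  move=> y hy; case: (eqVneq h y) => [->|hy']; first exact: connect0.
  apply: connect1; apply: edge_ok.
    by move: hy'; apply: contra => /eqP e; apply/eqP/val_inj.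
  rewrite /col2; case: ifP => H; [case: eqP => _; lia | lia].
case: (eqVneq (x %/ 2) i) => hx; first exact: near.
case: (ltnP x (2 * k'.+1)) => hxk; last first.
  apply: connect1; apply: edge_ok; first (apply/eqP; rewrite /= hh; lia).
  rewrite /col2; case: ifP => H; [lia|]; rewrite ifT; lia.
pose t := if i < x %/ 2 then 2 * i + x %% 2 else 2 * i + (1 - x %% 2).
have ht : t < n by rewrite /t; case: ifP => _; lia.
apply: (connect_trans (near (Ordinal ht) _)); first by rewrite /= /t; case: ifP => _; lia.
apply: connect1; apply: edge_ok => /=; first by apply/eqP; rewrite /t; case: ifP => _; lia.
rewrite /col2 /t; case: (ltnP i (x %/ 2)) => hij.
  rewrite ifT; last (apply/andP; split; lia).
  rewrite ifT; [lia | apply/eqP; lia].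
rewrite ifT; last (apply/andP; split; lia).
rewrite ifF; [lia | apply/negbTE/eqP; lia].
Qed.

Lemma part2 d k : 3 <= d -> d <= k ->
  (exists N : nat, forall n : nat, N <= n ->
      exists c : 'I_n -> 'I_n -> 'I_k,
        connected_colouring c /\
        forall S : {set 'I_n}, #|S| = d -> #|edge_colours c S| <= d).
Proof.
case: k => [|k'] hd hk; first by lia.
exists (2 * k'.+1) => n hn; exists (cc k').
have symc : sym_colouring (@cc n k') by move=> x y; rewrite /cc col2_sym.
split.
  split => // i x y.
  have hi := ltn_ord i.
  have h2 : 2 * i < n by lia.
  have symr : symmetric (colour_rel (@cc n k') i).
    by move=> u v; rewrite /colour_rel /= eq_sym symc.
  apply: (@connect_trans _ _ (Ordinal h2)).
    by rewrite (sym_connect_sym symr); apply: conn_hub.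
  exact: conn_hub.
move=> S hS; rewrite -hS.
apply: leq_trans (leq_imset_card (fun x : 'I_n => (inord (own k'.+1 x) : 'I_k'.+1)) S).
apply: subset_leq_card; apply/subsetP => a /imset2P [x y hx hy ->].
rewrite /cc; case: (col2_own k'.+1 x y) => ->; apply/imsetP.
  by exists x.
by exists y => //; move: hy; rewrite inE => /andP [].
Qed.

Theorem proposition14 (d k : nat) :
  3 <= d -> d <= k ->
  (forall (n : nat) (c : 'I_n -> 'I_n -> 'I_k),
      2 <= n -> connected_colouring c ->
      exists S : {set 'I_n}, #|S| = d /\ d <= #|edge_colours c S|)
  /\
  (exists N : nat, forall n : nat, N <= n ->
      exists c : 'I_n -> 'I_n -> 'I_k,
        connected_colouring c /\
        forall S : {set 'I_n}, #|S| = d -> #|edge_colours c S| <= d).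
Proof.
move=> hd hk; split; [exact: part1 | exact: part2].
Qed.
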